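(* Let $k\geq 2$ and let $G$ be a graph of order $n$ containing no cycle of length $2k+1$. Then for every vertex $w$ of $G$ with $d_w\geq 1$, \[ d_{w}+\frac{1}{d_{w}}\sum_{u\in\Gamma_{w}}d_{u}\leq n+2k-2. \]
   Context: All graphs are finite and simple. $\Gamma_w$ is the set of neighbors of $w$ and $d_w=|\Gamma_w|$ its degree. *)

(* Defs.v *)
From mathcomp Require Import all_boot all_order all_algebra.
Set Implicit Arguments. Unset Strict Implicit. Unset Printing Implicit Defensive.

Definition simple_graph (T : finType) (e : rel T) : Prop :=
  symmetric e /\ irreflexive e.

Definition nbhd (T : finType) (e : rel T) (w : T) : {set T} := [set u | e w u].
Definition deg (T : finType) (e : rel T) (w : T) : nat := #|nbhd e w|.

Definition has_cycle_of_length (T : finType) (e : rel T) (m : nat) : Prop :=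
  exists s : seq T, [/\ size s = m, uniq s & cycle e s].

(* Main.v *)
Require Import Defs.
From mathcomp Require Import all_boot all_order all_algebra.
From mathcomp Require Import zify.
Set Implicit Arguments. Unset Strict Implicit. Unset Printing Implicit Defensive.
Local Open Scope nat_scope.


Lemma cyc_lemma (T : eqType) (e : rel T) (hs : symmetric e) a q1 b q2 :
  path e a (q1 ++ b :: q2) -> e a b -> e (last a q1) (last b q2) ->
  cycle e (a :: q1 ++ rev (b :: q2)).
Proof.
rewrite cat_path /= => /and3P[h1 h2 h3] hab hlast.
rewrite rcons_cat cat_path h1 /= rcons_path rev_cons last_rcons.
rewrite hs hab andbT.
rewrite -rev_cons (lastI b q2) rev_rcons /= hlast /=.
by rewrite rev_path; rewrite (@eq_path _ _ e).
Qed.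

Definition gp (T : finType) (e : rel T) (S : {set T}) (s : seq T) :=
  [&& sorted e s, uniq s & all (fun x => x \in S) s].
Definition dS (T : finType) (e : rel T) (S : {set T}) u := #|[set v in S | e u v]|.

Lemma cycle_block (T : finType) (e : rel T) (S : {set T}) (P c : seq T)
  (hmax : forall s, gp e S s -> size s <= size P)
  (hc : cycle e c) (hu : uniq c) (hcS : all (fun x => x \in S) c)
  (hsz : size c = size P) x y :
  x \in S -> x \notin c -> y \in c -> e x y = false.
Proof.
move=> xS xc yc; apply/negbTE/negP => exy.
case: (rot_to yc) => j r hr.
have hc' : cycle e (y :: r) by rewrite -hr rot_cycle.
have hpr : path e y r by move: hc' => /= ; rewrite rcons_path => /andP[].
have := hmax (x :: y :: r).
rewrite /gp /= exy hpr xS /=.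
have : uniq (y :: r) by rewrite -hr rot_uniq.
have hxr : x \notin y :: r by rewrite -hr mem_rot.
have : all (fun x => x \in S) (y :: r) by apply/allP => z; rewrite -hr mem_rot => /(allP hcS).
have : size (y :: r) = size P by rewrite -hr size_rot.
move=> hs1 ha1 hu1; move: hxr ha1 hu1 => /= -> /andP[-> ->] -> /(_ isT).
move: hs1 => /= ->; by rewrite ltnn.
Qed.

Lemma closure (T : finType) (e : rel T) (hs : symmetric e) (hi : irreflexive e)
  (S : {set T}) (k : nat) (P : seq T) (hP : gp e S P)
  (hmax : forall s, gp e S s -> size s <= size P) (hlt : size P < 2 * k)
  (hdeg : forall v, v \in S -> k <= dS e S v) x y :
  x \in S -> x \notin P -> y \in P -> e x y = false.
Proof.
move=> xS xP yP.
case: P hP hmax hlt xP yP => [//|v0 p'] hP hmax hlt xP yP.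
move/and3P: (hP) => [hs1 hu1 ha1].
have v0S : v0 \in S by move: ha1 => /= /andP[].
have N0 : forall u, u \in S -> e v0 u -> u \in v0 :: p'.
  move=> u uS eu; apply/negPn/negP => un.
  have := hmax (u :: v0 :: p').
  rewrite /gp /= ltnn [e u v0]hs eu.
  move: hs1 hu1 ha1 un => /= -> -> /andP[-> ->] /negPf.
  by rewrite uS => -> /= H; have := H isT.
have Nm : forall u, u \in S -> e (last v0 p') u -> u \in v0 :: p'.
  move=> u uS eu; apply/negPn/negP => un.
  have := hmax (rcons (v0 :: p') u).
  rewrite /gp rcons_uniq un hu1 all_rcons uS ha1 size_rcons ltnn.
  rewrite /sorted /= rcons_path eu.
  by move: hs1 => /= -> /(_ isT).
set m := size p'.
pose A := [set i : 'I_m | e v0 (nth v0 (v0 :: p') i.+1)].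
pose B := [set i : 'I_m | e (last v0 p') (nth v0 (v0 :: p') i)].
have hA : k <= #|A|.
  apply: (leq_trans (hdeg v0 v0S)).
  apply: (leq_trans _ (leq_imset_card (fun i : 'I_m => nth v0 (v0 :: p') i.+1) A)).
  apply: subset_leq_card; apply/subsetP => u; rewrite inE => /andP[uS eu].
  have uP := N0 u uS eu.
  have hj : index u (v0 :: p') < size (v0 :: p') by rewrite index_mem.
  have hnth := nth_index v0 uP.
  case hj0 : (index u (v0 :: p')) => [|i] //.
    by move: hnth; rewrite hj0 /= => huv; rewrite -huv hi in eu.
  have him : i < m by rewrite hj0 in hj.
  apply/imsetP; exists (Ordinal him); rewrite ?inE;
    change (nat_of_ord (Ordinal him)) with i; rewrite -hj0 hnth //.
have hB : k <= #|B|.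
  have vmS : last v0 p' \in S.
    move/allP: ha1 => /(_ (last v0 p')); apply; exact: mem_last.
  apply: (leq_trans (hdeg (last v0 p') vmS)).
  apply: (leq_trans _ (leq_imset_card (fun i : 'I_m => nth v0 (v0 :: p') i) B)).
  apply: subset_leq_card; apply/subsetP => u; rewrite inE => /andP[uS eu].
  have uP := Nm u uS eu.
  have hj : index u (v0 :: p') < size (v0 :: p') by rewrite index_mem.
  have hnth := nth_index v0 uP.
  have hjm : index u (v0 :: p') != m.
    apply/eqP => hjm; move: hnth; rewrite hjm.
    rewrite (_ : m = (size (v0 :: p')).-1) // nth_last /= => huv.
    by rewrite huv hi in eu.
  have him : index u (v0 :: p') < m.
    rewrite ltn_neqAle hjm -ltnS; exact: hj.
  apply/imsetP; exists (Ordinal him); rewrite ?inE;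
    change (nat_of_ord (Ordinal him)) with (index u (v0 :: p')); rewrite hnth //.
have : 0 < #|A :&: B|.
  have := cardsUI A B.
  have : #|A :|: B| <= m by apply: leq_trans (max_card _) _; rewrite card_ord.
  have hm : m < 2 * k by exact: ltnW hlt.
  move: hA hB hm; clearbody A B m; lia.
case/card_gt0P => i /setIP[]; rewrite !inE => iA iB.
have hi' : i < size p' := ltn_ord i.
case hd : (drop i p') => [|b q2].
  by move: (size_drop i p'); rewrite hd /= => /esym/eqP; rewrite subn_eq0 leqNgt hi'.
have [q1 hq1 hp'] : exists2 q1, size q1 = i & p' = q1 ++ b :: q2.
  by exists (take i p'); [rewrite size_takel // ltnW | rewrite -hd cat_take_drop].
have eb : nth v0 (v0 :: p') i.+1 = b by rewrite /= hp' nth_cat hq1 ltnn subnn.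
have el : nth v0 (v0 :: p') i = last v0 q1.
  rewrite hp' -cat_cons nth_cat (_ : i < size (v0 :: q1)); last by rewrite /= hq1.
  by rewrite -hq1; exact: (nth_last v0 (v0 :: q1)).
have elast : last v0 p' = last b q2 by rewrite hp' last_cat.
rewrite eb in iA; rewrite el elast in iB.
have hpath : path e v0 (q1 ++ b :: q2) by rewrite -hp'.
have hcyc := cyc_lemma hs hpath iA (ltac:(by rewrite hs)).

have hperm : perm_eq (v0 :: q1 ++ rev (b :: q2)) (v0 :: p').
  by rewrite hp' perm_cons perm_cat2l perm_rev ?perm_refl.
apply: (cycle_block hmax hcyc).
- by rewrite (perm_uniq hperm).
- by apply/allP => z; rewrite (perm_mem hperm); exact: (allP ha1 z).
- exact: perm_size hperm.
- exact: xS.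
- by rewrite (perm_mem hperm).
- by rewrite (perm_mem hperm).
Qed.

Lemma gp_sub (T : finType) (e : rel T) (A B : {set T}) s :
  A \subset B -> gp e A s -> gp e B s.
Proof.
move=> /subsetP sub /and3P[h1 h2 h3]; rewrite /gp h1 h2 /=.
by apply/allP => z zs; apply: sub; exact: (allP h3 z zs).
Qed.

Lemma EG (T : finType) (e : rel T) (hs : symmetric e) (hi : irreflexive e)
  (k : nat) (hk : 1 <= k) (S : {set T}) :
  (forall s, gp e S s -> size s < 2 * k) ->
  \sum_(u in S) dS e S u <= (2 * k - 2) * #|S|.
Proof.
have [n] := ubnP #|S|; elim: n S => // n IH S hSn hfree.
case: (boolP [exists v in S, dS e S v < k]).
  case/existsP => v /andP[vS hv].
  set S' := S :\ v.
  have hS' : #|S| = (#|S'|).+1 by rewrite (cardsD1 v S) vS.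
  have IH' := IH S' (ltac:(by rewrite -ltnS -hS'))
    (fun s hs' => hfree s (gp_sub (subD1set S v) hs')).
  rewrite (bigD1 v vS) /=.
  rewrite (eq_bigl (fun u => u \in S')); last by move=> u; rewrite !inE andbC.
  rewrite (eq_bigr (fun u => (e u v : nat) + dS e S' u)); last first.
    move=> u uS'; rewrite /dS (cardsD1 v) inE vS /=.
    rewrite (_ : [set x in S | e u x] :\ v = [set x in S' | e u x]) //.
    by apply/setP => z; rewrite !inE andbA.
  rewrite big_split /=.
  have hsum : \sum_(u in S') (e u v : nat) = dS e S v.
    rewrite /dS -sum1_card -big_mkcondr /=.
    apply: eq_bigl => u; rewrite !inE hs.
    by case: (eqVneq u v) => [->|]; rewrite ?hi ?andbF //= andbT.
  rewrite hsum; move: IH' hv hS'; lia.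
move=> /existsPn hno.
have hdeg : forall v, v \in S -> k <= dS e S v.
  by move=> v vS; move: (hno v); rewrite vS /= -leqNgt.
case: (set_0Vmem S) => [->|[y yS]]; first by rewrite big_set0.
pose Pn := fun n => [exists s : n.-tuple T, gp e S s].
have ex : exists n, Pn n.
  by exists 1; apply/existsP; exists [tuple y]; rewrite /gp /= yS.
have ub : forall n, Pn n -> n <= 2 * k.
  move=> m /existsP [s hs']; rewrite -(size_tuple s); exact: ltnW (hfree _ hs').
case: (ex_maxnP ex ub) => N /existsP[P hP] hmaxN.
have hmax : forall s, gp e S s -> size s <= size P.
  move=> s hs'; rewrite size_tuple; apply: hmaxN; apply/existsP; exists (in_tuple s).
  exact: hs'.
have hN1 : 1 <= N by apply: hmaxN; apply/existsP; exists [tuple y]; rewrite /gp /= yS.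
have hcl := closure hs hi hP hmax (hfree _ hP) hdeg.
move/and3P: (hP) => [_ hu ha].
set C := [set u in (P : seq T)].
have hC : C \subset S by apply/subsetP => z; rewrite inE => /(allP ha).
have hCs : #|C| = size P by rewrite cardsE; apply/card_uniqP.
set S' := S :\: C.
have hS' : #|C| + #|S'| = #|S| by rewrite -(cardsID C S) (setIidPr hC).
have IH' := IH S' (ltac:(by move: hSn hN1 hS'; rewrite hCs size_tuple; lia))
    (fun s hs' => hfree s (gp_sub (subsetDl S C) hs')).
rewrite (bigID (fun u => u \in C)) /=.
have h1 : \sum_(u in S | u \in C) dS e S u <= #|C| * (2 * k - 2).
  rewrite (eq_bigl (fun u => u \in C)); last first.
    by move=> u; case uC: (u \in C); rewrite ?andbT ?andbF // (subsetP hC).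
  rewrite -sum_nat_const; apply: leq_sum => u uC.
  have : [set v in S | e u v] \subset C :\ u.
    apply/subsetP => z; rewrite !inE => /andP[zS euz].
    case: (eqVneq z u) => [ezu|nzu]; first by rewrite ezu hi in euz.
    case zC: (z \in (P : seq T)) => //.
    have := hcl z u zS (negbT zC); rewrite inE in uC; rewrite uC hs euz.
    by move=> /(_ isT).
  move=> /subset_leq_card; rewrite /dS => h; apply: (leq_trans h).
  have := cardsD1 u C; rewrite uC hCs /= => hc.
  have := hfree _ hP; lia.
have h2 : \sum_(u in S | u \notin C) dS e S u = \sum_(u in S') dS e S' u.
  apply: eq_big => [u|u]; first by rewrite !inE andbC.
  rewrite !inE => /andP[uS uC]; rewrite /dS.
  rewrite (_ : [set v in S | e u v] = [set v in S' | e u v]) //; apply/setP => z.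
  rewrite !inE; case zC: (z \in (P : seq T)) => /=; last by [].
  case: (z \in S) => //=.
  by rewrite (hcl u z uS) //; rewrite inE in uC.
rewrite h2; move: h1 IH' hS'; lia.
Qed.

Lemma nbhd_free (T : finType) (e : rel T) (hs : symmetric e) (hi : irreflexive e)
  (k : nat) (hk : 1 <= k) (w : T) :
  ~ (exists s : seq T, [/\ size s = 2 * k + 1, uniq s & cycle e s]) ->
  forall s, gp e [set u | e w u] s -> size s < 2 * k.
Proof.
move=> hfree s hs'; rewrite ltnNge; apply/negP => hsz; apply: hfree.
move/and3P: hs' => [h1 h2 h3].
have hsz' : size (take (2 * k) s) = 2 * k by rewrite size_takel.
have hu' : uniq (take (2 * k) s) := take_uniq _ h2.
have ha' : forall z, z \in take (2 * k) s -> e w z.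
  by move=> z /mem_take /(allP h3); rewrite inE.
have hst := take_sorted (2 * k) h1.
case hs'e : (take (2 * k) s) hsz' hu' ha' hst => [|a q] hsz' hu' ha' hst.
  by move: hsz'; rewrite /=; lia.
exists (w :: a :: q); split.
- by move: hsz' => /=; lia.
- by rewrite cons_uniq hu' andbT; apply/negP => /ha'; rewrite hi.
- rewrite /= rcons_path /=; apply/andP; split; [|apply/andP; split].
  + exact: ha' (mem_head a q).
  + exact: hst.
  + rewrite hs; apply: ha'; exact: mem_last.
Qed.

Import Order.TTheory GRing.Theory Num.Theory.
Local Open Scope ring_scope.

Theorem mainTheorem9 (T : finType) (e : rel T) (k : nat)
  (hG : simple_graph e) (hk : (2 <= k)%N)
  (hfree : ~ has_cycle_of_length e (2 * k + 1)) (w : T)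
  (hw : (1 <= deg e w)%N) :
  (deg e w)%:R + (\sum_(u in nbhd e w) ((deg e u)%:R : rat)) / (deg e w)%:R
    <= (#|T| + 2 * k - 2)%:R.
Proof.
move: hG => [hs hi].
have hk1 : (1 <= k)%N by apply: leq_trans hk.
have hfr := nbhd_free hs hi hk1 hfree.
have hEG := EG hs hi hk1 (hfr w).
have hdeg : forall u, (deg e u <= dS e (nbhd e w) u + (#|T| - deg e w))%N.
  move=> u; rewrite /deg /dS -(cardsID (nbhd e w) (nbhd e u)).
  apply: leq_add.
    rewrite (_ : nbhd e u :&: nbhd e w = [set v in nbhd e w | e u v]) //.
    by apply/setP => z; rewrite !inE andbC.
  apply: (@leq_trans #|~: nbhd e w|).
    by apply: subset_leq_card; apply/subsetP => z; rewrite !inE => /andP[].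
  by rewrite -(cardsC (nbhd e w)) addKn.
have hsum : (\sum_(u in nbhd e w) deg e u <=
    (2 * k - 2) * deg e w + deg e w * (#|T| - deg e w))%N.
  apply: (@leq_trans (\sum_(u in nbhd e w) (dS e (nbhd e w) u + (#|T| - deg e w)))).
    by apply: leq_sum => u _; exact: hdeg u.
  rewrite big_split sum_nat_const /=; apply: leq_add; first exact: hEG.
  rewrite mulnC; exact: leqnn.
have hdn : (deg e w <= #|T|)%N by apply: max_card.
rewrite -natr_sum.
have hd0 : ((deg e w)%:R : rat) != 0 by rewrite pnatr_eq0 -lt0n.
rewrite -[X in X + _](mulfK hd0) -mulrDl ler_pdivrMr ?ltr0n // -!natrM -natrD ler_nat.
move: hsum hdn hk; set d := deg e w; set X := (\sum_(u in _) _)%N; set n := #|T|.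
move=> hsum hdn hk'.
have -> : ((n + 2 * k - 2) * d = d * d + ((2 * k - 2) * d + d * (n - d)))%N.
  nia.
by rewrite leq_add2l.
Qed.
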